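(* Let $k$ be a field and consider the graded algebras (with $\deg x=\deg y=1$) $A(p)=k\langle x,y\rangle/(xy^2-p^2y^2x,\ x^3y+px^2yx+p^2xyx^2+p^3yx^3)$ ($0\ne p\in k$); $B(p)=k\langle x,y\rangle/(xy^2+ip^2y^2x,\ x^3y+px^2yx+p^2xyx^2+p^3yx^3)$ ($0\ne p\in k$, $i\in k$, $i^2=-1$); $C(p)=k\langle x,y\rangle/(xy^2+pyxy+p^2y^2x,\ x^3y+jp^3yx^3)$ ($0\ne p\in k$, $j\in k$, $j^2-j+1=0$); $D(v,p)=k\langle x,y\rangle/(xy^2+vyxy+p^2y^2x,\ x^3y+(v+p)x^2yx+(p^2+pv)xyx^2+p^3yx^3)$ ($v,p\in k$, $p\ne0$). Two algebras from this list are isomorphic (as graded algebras) if and only if their defining relations (the displayed degree-3 relation and degree-4 relation, as elements of $k\langle x,y\rangle$) are the same. *)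

(* Defs.v *)
From mathcomp Require Import all_boot all_algebra.
Set Implicit Arguments. Unset Strict Implicit. Unset Printing Implicit Defensive.
Import GRing.Theory.
Local Open Scope ring_scope.

(* Free algebra k<x,y>: words over {x,y}, encoded as seq bool
   (false = x, true = y).  Elements of the
   (polynomial) free algebra are those with finite support; all objects
   below that matter (homogeneous elements, ideal elements) are such. *)
Definition word := seq bool.
Definition X : bool := false.
Definition Y : bool := true.

Section NC.
Variable k : fieldType.

Definition ncs := word -> k.
Definition nc_add (f g : ncs) : ncs := fun w => f w + g w.
Definition nc_sub (f g : ncs) : ncs := fun w => f w - g w.
Definition nc_scale (a : k) (f : ncs) : ncs := fun w => a * f w.
Definition nc_mul (f g : ncs) : ncs :=
  fun w => \sum_(i < (size w).+1) f (take i w) * g (drop i w).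
Definition nc_one : ncs := fun w => (w == [::])%:R.
Definition nc_mono (u : word) : ncs := fun w => (w == u)%:R.
Definition nc_of (l : seq (k * word)) : ncs :=
  fun w => \sum_(t <- l) t.1 * (t.2 == w)%:R.

Definition homog (n : nat) (f : ncs) : Prop :=
  forall w, f w != 0 -> size w = n.

Definition ideal_gen (rs : seq ncs) (f : ncs) : Prop :=
  exists L : seq (word * nat * word * k),
    forall w, f w = \sum_(t <- L)
      t.2 * nc_mul (nc_mul (nc_mono t.1.1.1) (nth (fun _ => 0) rs t.1.1.2))
                   (nc_mono t.1.2) w.

(* k<x,y>/I and k<x,y>/J (I, J graded ideals) are isomorphic as graded
   k-algebras: there are maps Psi n on degree-n representatives that are
   k-linear, induce well-defined bijections (k<x,y>/I)_n -> (k<x,y>/J)_n,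
   and are multiplicative and unital modulo J. *)
Definition graded_iso (I J : ncs -> Prop) : Prop :=
  exists Psi : nat -> ncs -> ncs,
     (forall n f, homog n f -> homog n (Psi n f)) /\
      (forall n a f g, homog n f -> homog n g ->
         Psi n (nc_add (nc_scale a f) g) =1 nc_add (nc_scale a (Psi n f)) (Psi n g)) /\
      (forall n f, homog n f -> (I f <-> J (Psi n f))) /\
      (forall n g, homog n g -> exists2 f, homog n f & J (nc_sub (Psi n f) g)) /\
      (forall m n f g, homog m f -> homog n g ->
         J (nc_sub (Psi (m + n)%N (nc_mul f g)) (nc_mul (Psi m f) (Psi n g)))) /\
      J (nc_sub (Psi 0%N nc_one) nc_one).

End NC.

Inductive member (k : Type) :=
| MA of k
| MB of k
| MC of k
| MD of k & k.

Section Members.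
Variable k : fieldType.

Definition valid (i j : k) (m : member k) : Prop :=
  match m with
  | MA p => p != 0
  | MB p => p != 0 /\ i ^+ 2 = -1
  | MC p => p != 0 /\ j ^+ 2 - j + 1 = 0
  | MD v p => p != 0
  end.

Definition rel3 (i j : k) (m : member k) : ncs k :=
  match m with
  | MA p => nc_of [:: (1, [:: X; Y; Y]); (- p ^+ 2, [:: Y; Y; X])]
  | MB p => nc_of [:: (1, [:: X; Y; Y]); (i * p ^+ 2, [:: Y; Y; X])]
  | MC p => nc_of [:: (1, [:: X; Y; Y]); (p, [:: Y; X; Y]); (p ^+ 2, [:: Y; Y; X])]
  | MD v p => nc_of [:: (1, [:: X; Y; Y]); (v, [:: Y; X; Y]); (p ^+ 2, [:: Y; Y; X])]
  end.

Definition rel4 (i j : k) (m : member k) : ncs k :=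
  match m with
  | MA p | MB p => nc_of [:: (1, [:: X; X; X; Y]); (p, [:: X; X; Y; X]);
                            (p ^+ 2, [:: X; Y; X; X]); (p ^+ 3, [:: Y; X; X; X])]
  | MC p => nc_of [:: (1, [:: X; X; X; Y]); (j * p ^+ 3, [:: Y; X; X; X])]
  | MD v p => nc_of [:: (1, [:: X; X; X; Y]); (v + p, [:: X; X; Y; X]);
                       (p ^+ 2 + p * v, [:: X; Y; X; X]); (p ^+ 3, [:: Y; X; X; X])]
  end.

Definition rel_ideal (i j : k) (m : member k) : ncs k -> Prop :=
  ideal_gen [:: rel3 i j m; rel4 i j m].
End Members.

(* Main.v *)
Require Import Defs.
From mathcomp Require Import all_boot all_algebra ring zify.
From Stdlib Require Import FunctionalExtensionality.
Import GRing.Theory.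

Section Aux.
Local Open Scope ring_scope.
Variable k : fieldType.
Implicit Types (f g h r : ncs k) (w u v : word).

Lemma mul_homogL n h g w : homog n h ->
  nc_mul h g w = if (n <= size w)%N then h (take n w) * g (drop n w) else 0.
Proof.
move=> hh; rewrite /nc_mul.
case: leqP => Hn.
- have Hlt : (n < (size w).+1)%N by rewrite ltnS.
  rewrite (bigD1 (Ordinal Hlt)) //=.
  rewrite big1 ?addr0 // => j /eqP neq.
  case: (eqVneq (val j) n) => [E|NE].
    by case: neq; apply: val_inj.
  have -> : h (take j w) = 0; last by rewrite mul0r.
  have Hj : (j <= size w)%N by rewrite -ltnS.
  apply/eqP; apply: contraT => /hh.
  by rewrite size_takel // => /eqP; rewrite (negPf NE).
- rewrite big1 // => j _.
  have -> : h (take j w) = 0; last by rewrite mul0r.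
  have Hj : (j <= size w)%N by rewrite -ltnS.
  apply/eqP; apply: contraT => /hh.
  rewrite size_takel // => E.
  have := ltn_ord j; rewrite E ltnS => H; have := leq_ltn_trans H Hn.
  by rewrite ltnn.
Qed.

Lemma mul_homogR n h g w : homog n g ->
  nc_mul h g w = if (n <= size w)%N
     then h (take (size w - n) w) * g (drop (size w - n) w) else 0.
Proof.
move=> hh; rewrite /nc_mul.
case: leqP => Hn.
- have Hlt : (size w - n < (size w).+1)%N by rewrite ltnS leq_subr.
  rewrite (bigD1 (Ordinal Hlt)) //=.
  rewrite big1 ?addr0 // => j /eqP neq.
  case: (eqVneq (val j) (size w - n)%N) => [E|NE].
    by case: neq; apply: val_inj.
  have -> : g (drop j w) = 0; last by rewrite mulr0.
  apply/eqP; apply: contraT => /hh.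
  rewrite size_drop => E; rewrite -E subKn ?eqxx // in NE; by rewrite -ltnS.

- rewrite big1 // => j _.
  have -> : g (drop j w) = 0; last by rewrite mulr0.
  apply/eqP; apply: contraT => /hh.
  rewrite size_drop => E.
  have : (size w - j <= size w)%N by apply: leq_subr.
  by rewrite E leqNgt Hn.
Qed.

Lemma homog_mono u : homog (size u) (nc_mono k u).
Proof. move=> w; rewrite /nc_mono; case: (w =P u) => [->//|_]; by rewrite eqxx. Qed.

Lemma count_take_le (a : bool) n (s : word) : (count_mem a (take n s) <= count_mem a s)%N.
Proof. by rewrite -{2}(cat_take_drop n s) count_cat leq_addr. Qed.
Lemma count_drop_le (a : bool) n (s : word) : (count_mem a (drop n s) <= count_mem a s)%N.
Proof. by rewrite -{2}(cat_take_drop n s) count_cat leq_addl. Qed.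

Definition term u r v := nc_mul (nc_mul (nc_mono k u) r) (nc_mono k v).

Lemma term_nil r w : term [::] r [::] w = r w.
Proof.
rewrite /term (mul_homogR _ _ _ _ (homog_mono _)) /= subn0 take_size drop_size.
rewrite (mul_homogL _ _ _ _ (homog_mono _)) /= take0 drop0.
by rewrite /nc_mono !eqxx mul1r mulr1.
Qed.

Lemma term_supp u r v w : term u r v w != 0 ->
  exists w', [/\ size w = (size u + size w' + size v)%N,
     (count_mem Y w' <= count_mem Y w)%N & r w' != 0].
Proof.
rewrite /term (mul_homogR _ _ _ _ (homog_mono _)).
case: leqP => H; last by rewrite eqxx.
rewrite (mul_homogL _ _ _ _ (homog_mono _)).
case: leqP => H2; last by rewrite !mul0r eqxx.
set w' := drop _ _ => Hnz.
exists w'; split.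
- rewrite /w' size_drop size_takel ?leq_subr //.
  move: H2; rewrite size_takel ?leq_subr // => H2.
  lia.
- apply: leq_trans (count_drop_le _ _ _) _; exact: count_take_le.
- by apply: contraNneq Hnz => ->; rewrite mulr0 mul0r.
Qed.


Definition R3 (v s : k) : ncs k :=
  nc_of [:: (1, [:: X; Y; Y]); (v, [:: Y; X; Y]); (s, [:: Y; Y; X])].
Definition R4 (a b c : k) : ncs k :=
  nc_of [:: (1, [:: X; X; X; Y]); (a, [:: X; X; Y; X]);
            (b, [:: X; Y; X; X]); (c, [:: Y; X; X; X])].

Definition supp3 r := forall w, r w != 0 -> size w = 3%N /\ count_mem Y w = 2%N.
Definition supp4 r := forall w, r w != 0 -> size w = 4%N /\ count_mem Y w = 1%N.

Lemma R3_supp (v s : k) : supp3 (R3 v s).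
Proof.
move=> w; rewrite /R3 /nc_of !big_cons big_nil /=.
case: (eqVneq [:: X; Y; Y] w) => [<-//|_].
case: (eqVneq [:: Y; X; Y] w) => [<-//|_].
case: (eqVneq [:: Y; Y; X] w) => [<-//|_].
by rewrite !mulr0 !addr0 eqxx.
Qed.

Lemma R4_supp (a b c : k) : supp4 (R4 a b c).
Proof.
move=> w; rewrite /R4 /nc_of !big_cons big_nil /=.
case: (eqVneq [:: X; X; X; Y] w) => [<-//|_].
case: (eqVneq [:: X; X; Y; X] w) => [<-//|_].
case: (eqVneq [:: X; Y; X; X] w) => [<-//|_].
case: (eqVneq [:: Y; X; X; X] w) => [<-//|_].
by rewrite !mulr0 !addr0 eqxx.
Qed.

Section GoodS.
Variables r3 r4 : ncs k.
Hypothesis s3 : supp3 r3.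
Hypothesis s4 : supp4 r4.

Definition Good f :=
  [/\ forall w, (size w <= 2)%N -> f w = 0,
      exists e, forall w, size w = 3%N -> f w = e * r3 w &
      exists e, forall w, size w = 4%N -> count_mem Y w = 1%N -> f w = e * r4 w].

Lemma nth_supp idx w : nth (fun _ => 0) [:: r3; r4] idx w != 0 ->
  (size w = 3%N /\ count_mem Y w = 2%N) \/ (size w = 4%N /\ count_mem Y w = 1%N).
Proof.
case: idx => [|[|idx]] /= H; [left; exact: s3 | right; exact: s4 |].
by rewrite nth_nil eqxx in H.
Qed.

Lemma r3_0 w : size w != 3%N -> r3 w = 0.
Proof. by move=> H; apply/eqP; apply: contraT => /s3 [E _]; rewrite E in H. Qed.
Lemma r4_0 w : size w != 4%N -> r4 w = 0.
Proof. by move=> H; apply/eqP; apply: contraT => /s4 [E _]; rewrite E in H. Qed.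
Lemma r3_0c w : count_mem Y w != 2%N -> r3 w = 0.
Proof. by move=> H; apply/eqP; apply: contraT => /s3 [_ E]; rewrite E in H. Qed.

Lemma ideal_Good f : ideal_gen [:: r3; r4] f -> Good f.
Proof.
case=> L HL; split.
- move=> w Hw; rewrite HL big1 // => [[[[u idx] v] c]] _ /=.
  apply/eqP; apply: contraT; rewrite mulf_eq0 negb_or => /andP [_].
  case/term_supp => w' [E _ /nth_supp]; lia.
- exists (\sum_(t <- L) t.2 * ((t.1.1.1 == [::]) && (t.1.2 == [::]) && (t.1.1.2 == 0%N))%:R).
  move=> w Hw; rewrite HL big_distrl; apply: eq_bigr => [[[[u idx] v] c]] _ /=.
  rewrite -mulrA; congr (_ * _).
  case: u => [|a u]; case: v => [|b v] /=.
  + rewrite -/(term _ _ _) term_nil; case: idx => [|[|idx]] /=.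
    * by rewrite mul1r.
    * by rewrite mul0r r4_0 // Hw.
    * by rewrite nth_nil mul0r.
  + rewrite mul0r; apply/eqP; apply: contraT.
    case/(term_supp) => w' [E _ /nth_supp H]; move: E H => /=; lia.
  + rewrite mul0r; apply/eqP; apply: contraT.
    case/(term_supp) => w' [E _ /nth_supp H]; move: E H => /=; lia.
  + rewrite mul0r; apply/eqP; apply: contraT.
    case/(term_supp) => w' [E _ /nth_supp H]; move: E H => /=; lia.
- exists (\sum_(t <- L) t.2 * ((t.1.1.1 == [::]) && (t.1.2 == [::]) && (t.1.1.2 == 1%N))%:R).
  move=> w Hw Hc; rewrite HL big_distrl; apply: eq_bigr => [[[[u idx] v] c]] _ /=.
  rewrite -mulrA; congr (_ * _).
  case: u => [|a u]; case: v => [|b v] /=.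
  + rewrite -/(term _ _ _) term_nil; case: idx => [|[|idx]] /=.
    * by rewrite mul0r r3_0c // Hc.
    * by rewrite mul1r.
    * by rewrite nth_nil mul0r.
  + rewrite mul0r; apply/eqP; apply: contraT.
    case/(term_supp) => w' [E C /nth_supp H]; move: E C H => /=; move=> E0 C0 H0; rewrite Hc in C0; lia.
  + rewrite mul0r; apply/eqP; apply: contraT.
    case/(term_supp) => w' [E C /nth_supp H]; move: E C H => /=; move=> E0 C0 H0; rewrite Hc in C0; lia.
  + rewrite mul0r; apply/eqP; apply: contraT.
    case/(term_supp) => w' [E C /nth_supp H]; move: E C H => /=; move=> E0 C0 H0; rewrite Hc in C0; lia.
Qed.

Lemma Good_ext f g : Good f -> f =1 g -> Good g.
Proof.
move=> [H1 [e2 H2] [e4 H4]] E; split.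
- by move=> w Hw; rewrite -E H1.
- by exists e2 => w Hw; rewrite -E H2.
- by exists e4 => w Hw Hc; rewrite -E H4.
Qed.

Lemma Good_lin a f g : Good f -> Good g -> Good (fun w => a * f w + g w).
Proof.
move=> [F1 [e2 F2] [e4 F4]] [G1 [e2' G2] [e4' G4]]; split.
- by move=> w Hw; rewrite F1 // G1 // mulr0 addr0.
- by exists (a * e2 + e2') => w Hw; rewrite F2 // G2 // mulrDl mulrA.
- by exists (a * e4 + e4') => w Hw Hc; rewrite F4 // G4 // mulrDl mulrA.
Qed.

Lemma Good0 : Good (fun _ => 0).
Proof.
split => //; first by exists 0 => w _; rewrite mul0r.
by exists 0 => w _ _; rewrite mul0r.
Qed.

Lemma mul1E h g w : homog 1 h ->
  nc_mul h g w = if w is a :: w' then h [:: a] * g w' else 0.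
Proof.
move=> hh; rewrite (mul_homogL _ _ _ _ hh).
by case: w => [|a w] //=; rewrite take0 drop0.
Qed.

Lemma Good_mulL h f : homog 1 h -> Good f -> Good (nc_mul h f).
Proof.
move=> hh [F1 [e2 F2] [e4 F4]]; split.
- move=> [|a w] Hw; rewrite mul1E //= F1 ?mulr0 //; move: Hw => /=; lia.
- exists 0 => -[|a w] //= Hw; rewrite mul1E // F1; [by rewrite mulr0 mul0r | lia].
- exists 0 => -[|a w] //= Hw Hc; rewrite mul1E // F2; last lia.
  rewrite r3_0c ?mulr0 ?mul0r //.
  move: Hc; case: a => /= Hc; lia.
Qed.

End GoodS.


Fixpoint Phi (Z : bool -> ncs k) (u : word) : ncs k :=
  match u with
  | [::] => nc_one k
  | a :: u' => if u' is [::] then Z a else nc_mul (Z a) (Phi Z u')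
  end.

Lemma homog_add n f g : homog n f -> homog n g -> homog n (nc_add f g).
Proof.
move=> hf hg w; rewrite /nc_add; case: (eqVneq (f w) 0) => [->|/hf//].
by rewrite add0r => /hg.
Qed.
Lemma homog_scale n a f : homog n f -> homog n (nc_scale a f).
Proof.
move=> hf w; rewrite /nc_scale; case: (eqVneq (f w) 0) => [->|/hf//].
by rewrite mulr0 eqxx.
Qed.
Lemma homog0 n : homog n (fun _ : word => 0 : k).
Proof. by move=> w; rewrite eqxx. Qed.

Lemma mono_cons a u : nc_mono k (a :: u) = nc_mul (nc_mono k [:: a]) (nc_mono k u).
Proof.
apply: functional_extensionality => w.
rewrite (mul1E _ _ _ (homog_mono [:: a])).
case: w => [|b w] //=; rewrite /nc_mono !eqseq_cons andbT.
by case: (b == a); rewrite ?mul1r ?mul0r.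
Qed.

Lemma mulB1 h f g w : homog 1 h ->
  nc_mul h (fun w => f w - g w) w = nc_mul h f w - nc_mul h g w.
Proof.
move=> hh; rewrite !(mul1E _ _ _ hh); case: w => [|a w]; first by rewrite subr0.
by rewrite mulrBr.
Qed.

Section Main.
Variables (v1 s1 al1 be1 ga1 v2 s2 al2 be2 ga2 : k).
Hypothesis s1nz : s1 != 0.
Let I := ideal_gen [:: R3 v1 s1; R4 al1 be1 ga1].
Let J := ideal_gen [:: R3 v2 s2; R4 al2 be2 ga2].
Variable Psi : nat -> ncs k -> ncs k.
Hypothesis Hh : forall n f, homog n f -> homog n (Psi n f).
Hypothesis Hlin : forall n a f g, homog n f -> homog n g ->
  Psi n (nc_add (nc_scale a f) g) =1 nc_add (nc_scale a (Psi n f)) (Psi n g).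
Hypothesis Hiso : forall n f, homog n f -> (I f <-> J (Psi n f)).
Hypothesis Hmul : forall m n f g, homog m f -> homog n g ->
  J (nc_sub (Psi (m + n)%N (nc_mul f g)) (nc_mul (Psi m f) (Psi n g))).

Let G2 := Good (R3 v2 s2) (R4 al2 be2 ga2).
Lemma GoodJ f : J f -> G2 f.
Proof. exact: ideal_Good (R3_supp _ _) (R4_supp _ _ _) f. Qed.
Lemma GoodI f : I f -> Good (R3 v1 s1) (R4 al1 be1 ga1) f.
Proof. exact: ideal_Good (R3_supp _ _) (R4_supp _ _ _) f. Qed.

Lemma Psi0 n w : Psi n (fun _ => 0) w = 0.
Proof.
have := Hlin n 1 _ _ (homog0 n) (homog0 n) w.
have -> : nc_add (nc_scale 1 (fun _ : word => 0 : k)) (fun _ => 0) = (fun _ => 0).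
  by apply: functional_extensionality => u; rewrite /nc_add /nc_scale mulr0 addr0.
rewrite /nc_add /nc_scale mul1r => E.
by rewrite -[LHS](addrK (Psi n (fun _ => 0) w)) -E subrr.
Qed.

Lemma PsiS n b f w : homog n f -> Psi n (nc_scale b f) w = b * Psi n f w.
Proof.
move=> hf; have := Hlin n b _ _ hf (homog0 n) w.
have -> : nc_add (nc_scale b f) (fun _ : word => 0 : k) = nc_scale b f.
  by apply: functional_extensionality => u; rewrite /nc_add addr0.
by rewrite /nc_add /nc_scale Psi0 addr0.
Qed.

Let Z a := Psi 1 (nc_mono k [:: a]).
Lemma HZ a : homog 1 (Z a).
Proof. exact: (Hh 1 _ (homog_mono [:: a])). Qed.

Lemma PsiPhi u : u != [::] ->
  G2 (fun w => Psi (size u) (nc_mono k u) w - Phi Z u w).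
Proof.
elim: u => [//|a u IH] _; case: u IH => [|b u] IH.
  by apply: Good_ext (Good0 _ _) _ => w /=; rewrite subrr.
have := Hmul _ _ _ _ (homog_mono [:: a]) (homog_mono (b :: u)).
rewrite -mono_cons add1n => /GoodJ HG.
have HM := @Good_mulL (R3 v2 s2) (R4 al2 be2 ga2) (R3_supp v2 s2) _ _ (HZ a) (IH isT).
rewrite /G2 in HG *; apply: Good_ext (Good_lin _ _ 1 _ _ HG HM) _ => w /=.
rewrite /nc_sub mul1r mulB1; last exact: HZ.
by rewrite /Z addrA subrK.
Qed.


Lemma homR3 (v s : k) : homog 3 (R3 v s).
Proof. by move=> w /R3_supp []. Qed.
Lemma homR4 (a b c : k) : homog 4 (R4 a b c).
Proof. by move=> w /R4_supp []. Qed.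

Lemma I_R3 : I (R3 v1 s1).
Proof.
exists [:: ([::], 0%N, [::], 1)] => w.
by rewrite big_cons big_nil /= mul1r addr0 -/(term _ _ _) term_nil.
Qed.
Lemma I_R4 : I (R4 al1 be1 ga1).
Proof.
exists [:: ([::], 1%N, [::], 1)] => w.
by rewrite big_cons big_nil /= mul1r addr0 -/(term _ _ _) term_nil.
Qed.

Definition m3 (p q t : bool) := nc_mono k [:: p; q; t].
Definition m4 (p q t t2 : bool) := nc_mono k [:: p; q; t; t2].

Lemma R3dec (v s : k) : R3 v s = nc_add (nc_scale 1 (m3 X Y Y))
   (nc_add (nc_scale v (m3 Y X Y)) (nc_scale s (m3 Y Y X))).
Proof.
apply: functional_extensionality => w.
rewrite /R3 /nc_of !big_cons big_nil /nc_add /nc_scale /m3 /nc_mono addr0 /=.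
by rewrite ![_ == w]eq_sym.
Qed.

Lemma R4dec (a b c : k) : R4 a b c = nc_add (nc_scale 1 (m4 X X X Y))
   (nc_add (nc_scale a (m4 X X Y X))
   (nc_add (nc_scale b (m4 X Y X X)) (nc_scale c (m4 Y X X X)))).
Proof.
apply: functional_extensionality => w.
rewrite /R4 /nc_of !big_cons big_nil /nc_add /nc_scale /m4 /nc_mono addr0 /=.
by rewrite ![_ == w]eq_sym.
Qed.

Lemma hm3 (p q t : bool) : homog 3 (m3 p q t).
Proof. exact: (homog_mono [:: p; q; t]). Qed.
Lemma hm4 (p q t t2 : bool) : homog 4 (m4 p q t t2).
Proof. exact: (homog_mono [:: p; q; t; t2]). Qed.

Ltac hom := repeat first [apply: homog_add | apply: homog_scale | exact: hm4 | exact: hm3].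

Definition F3 w := Phi Z [:: X; Y; Y] w + v1 * Phi Z [:: Y; X; Y] w
   + s1 * Phi Z [:: Y; Y; X] w.
Definition F4 w := Phi Z [:: X; X; X; Y] w + al1 * Phi Z [:: X; X; Y; X] w
   + be1 * Phi Z [:: X; Y; X; X] w + ga1 * Phi Z [:: Y; X; X; X] w.

Lemma GF3 : G2 F3.
Proof.
have HP := GoodJ _ ((Hiso _ _ (homR3 v1 s1)).1 I_R3).
have E1 := PsiPhi [:: X; Y; Y] isT.
have E2 := PsiPhi [:: Y; X; Y] isT.
have E3 := PsiPhi [:: Y; Y; X] isT.
rewrite /G2 in HP E1 E2 E3 *.
apply: Good_ext (Good_lin _ _ 1 _ _ HP (Good_lin _ _ (-1) _ _ E1
   (Good_lin _ _ (- v1) _ _ E2 (Good_lin _ _ (- s1) _ _ E3 (Good0 _ _))))) _.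
move=> w /=; rewrite R3dec.
rewrite Hlin; [|exact: hm3|by apply: homog_add; apply: homog_scale; exact: hm3].
rewrite /nc_add /nc_scale Hlin; [|exact: hm3|apply: homog_scale; exact: hm3].
rewrite /nc_add /nc_scale PsiS; last exact: hm3.
rewrite /F3 /m3 /=; ring.
Qed.

Lemma GF4 : G2 F4.
Proof.
have HP := GoodJ _ ((Hiso _ _ (homR4 al1 be1 ga1)).1 I_R4).
have E1 := PsiPhi [:: X; X; X; Y] isT.
have E2 := PsiPhi [:: X; X; Y; X] isT.
have E3 := PsiPhi [:: X; Y; X; X] isT.
have E4 := PsiPhi [:: Y; X; X; X] isT.
rewrite /G2 in HP E1 E2 E3 E4 *.
apply: Good_ext (Good_lin _ _ 1 _ _ HP (Good_lin _ _ (-1) _ _ E1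
   (Good_lin _ _ (- al1) _ _ E2 (Good_lin _ _ (- be1) _ _ E3
   (Good_lin _ _ (- ga1) _ _ E4 (Good0 _ _)))))) _.
move=> w /=; rewrite R4dec.
rewrite Hlin; [|exact: hm4|by hom].
rewrite /nc_add /nc_scale Hlin; [|exact: hm4|by hom].
rewrite /nc_add /nc_scale Hlin; [|exact: hm4|by hom].
rewrite /nc_add /nc_scale PsiS; last exact: hm4.
rewrite /F4 /m4 /=; ring.
Qed.


Lemma Zsupp a w : size w != 1%N -> Z a w = 0.
Proof. by move=> H; apply/eqP; apply: contraT => /(HZ a) E; rewrite E in H. Qed.

Lemma Phi3E (p q t w0 w1 w2 : bool) :
  Phi Z [:: p; q; t] [:: w0; w1; w2] = Z p [:: w0] * (Z q [:: w1] * Z t [:: w2]).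
Proof. by rewrite /= !(mul1E _ _ _ (HZ _)). Qed.

Lemma Phi4E (p q t t2 w0 w1 w2 w3 : bool) :
  Phi Z [:: p; q; t; t2] [:: w0; w1; w2; w3] =
  Z p [:: w0] * (Z q [:: w1] * (Z t [:: w2] * Z t2 [:: w3])).
Proof. by rewrite /= !(mul1E _ _ _ (HZ _)). Qed.

Lemma indep a b : a * Z X [:: X] + b * Z Y [:: X] = 0 ->
  a * Z X [:: Y] + b * Z Y [:: Y] = 0 -> a = 0 /\ b = 0.
Proof.
move=> H1 H2.
pose f := nc_add (nc_scale a (nc_mono k [:: X])) (nc_scale b (nc_mono k [:: Y])).
have hf : homog 1 f.
  by apply: homog_add; apply: homog_scale; apply: (homog_mono [:: _]).
have HJ : J (Psi 1 f).
  exists [::] => w; rewrite big_nil Hlin; [|exact: (homog_mono [:: X])|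
    apply: homog_scale; exact: (homog_mono [:: Y])].
  rewrite /nc_add /nc_scale PsiS; last exact: (homog_mono [:: Y]).
  case: w => [|c [|d w]].
  - by rewrite -!/(Z _) !Zsupp // !mulr0 addr0.
  - by case: c; rewrite -!/(Z _) /=.
  - by rewrite -!/(Z _) !Zsupp // !mulr0 addr0.
have [HI _ _] := GoodI _ ((Hiso _ _ hf).2 HJ).
have := HI [:: X] isT; have := HI [:: Y] isT.
by rewrite /f /nc_add /nc_scale /nc_mono /= !mulr1 !mulr0 addr0 add0r => -> ->.
Qed.

Lemma det : Z X [:: X] * Z Y [:: Y] - Z X [:: Y] * Z Y [:: X] != 0.
Proof.
apply/eqP => E.
have [C0 A0] : Z Y [:: X] = 0 /\ - Z X [:: X] = 0.
  apply: indep; first by ring.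
  by rewrite -[RHS]oppr0 -E; ring.
have [D0 B0] : Z Y [:: Y] = 0 /\ - Z X [:: Y] = 0.
  apply: indep; last by ring.
  by rewrite -E; ring.
have [] := indep 0 1.
- by rewrite C0; ring.
- by rewrite D0; ring.
by move=> _ /eqP; rewrite oner_eq0.
Qed.

Lemma final : [/\ v1 = v2, s1 = s2, al1 = al2, be1 = be2 & ga1 = ga2].
Proof.
have [_ [lam H3] _] := GF3.
have [_ _ [mu H4]] := GF4.
have e1 := H3 [:: X; X; X] erefl. have e2 := H3 [:: X; X; Y] erefl.
have e3 := H3 [:: X; Y; Y] erefl. have e4 := H3 [:: Y; X; Y] erefl.
have e5 := H3 [:: Y; Y; X] erefl.
have f1 := H4 [:: X; X; X; Y] erefl erefl. have f2 := H4 [:: X; X; Y; X] erefl erefl.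
have f3 := H4 [:: X; Y; X; X] erefl erefl. have f4 := H4 [:: Y; X; X; X] erefl erefl.
have hdet := det.
move: e1 e2 e3 e4 e5 f1 f2 f3 f4 hdet.
rewrite /F3 /F4 !Phi3E !Phi4E /R3 /R4 /nc_of !big_cons !big_nil /=.
set A := Z X [:: X]; set B := Z X [:: Y]; set C := Z Y [:: X]; set D := Z Y [:: Y].
rewrite !mulr0 !mulr1 !addr0 !add0r.
move=> e1 e2 e3 e4 e5 f1 f2 f3 f4 hdet.
have C0 : C = 0.
  apply/eqP; apply: contraT => Cnz.
  case: (eqVneq (1 + v1 + s1) 0) => Hs.
  - have : s1 * C * (B * C - A * D) = 0.
      have -> : s1 * C * (B * C - A * D) = (A * (C * D) + v1 * (C * (A * D))
         + s1 * (C * (C * B))) - A * C * D * (1 + v1 + s1) by ring.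
      by rewrite e2 Hs; ring.
    move/eqP; rewrite !mulf_eq0 (negbTE s1nz) (negbTE Cnz) /= subr_eq0 => /eqP E.
    by rewrite E subrr eqxx in hdet.
  - have : A * C * C * (1 + v1 + s1) = 0.
      by rewrite -[RHS](mulr0 lam) -e1; ring.
    move/eqP; rewrite !mulf_eq0 (negbTE Cnz) (negbTE Hs) !orbF => /eqP A0.
    have : s1 * C * C * B = 0 by rewrite -[RHS](mulr0 lam) -e2 A0; ring.
    move/eqP; rewrite !mulf_eq0 (negbTE Cnz) (negbTE s1nz) /= => /eqP B0.
    by rewrite A0 B0 !mul0r subr0 eqxx in hdet.
rewrite C0 in e3 e4 e5 f1 f2 f3 f4 hdet.
have AD : A * D != 0 by move: hdet; rewrite mulr0 subr0.
have lamE : lam = A * (D * D) by rewrite -[lam]mulr1 -e3; ring.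
have lnz : lam != 0.
  move: AD; rewrite lamE mulf_eq0 negb_or => /andP[hA hD].
  by rewrite !mulf_neq0.
have muE : mu = A * (A * (A * D)) by rewrite -[mu]mulr1 -f1; ring.
have munz : mu != 0.
  move: AD; rewrite muE mulf_eq0 negb_or => /andP[hA hD].
  by rewrite !mulf_neq0.
split.
- by apply: (mulfI lnz); rewrite -e4 lamE; ring.
- by apply: (mulfI lnz); rewrite -e5 lamE; ring.
- by apply: (mulfI munz); rewrite -f2 muE; ring.
- by apply: (mulfI munz); rewrite -f3 muE; ring.
- by apply: (mulfI munz); rewrite -f4 muE; ring.
Qed.

End Main.

End Aux.

Section Shape.
Local Open Scope ring_scope.
Lemma shape (k : fieldType) (i j : k) m : valid i j m ->
  exists (v s a b c : k), [/\ s != 0, rel3 i j m = R3 k v s & rel4 i j m = R4 k a b c].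
Proof.
case: m => [p|p|p|v p] /=.
- move=> pnz; exists 0, (- p ^+ 2), p, (p ^+ 2), (p ^+ 3); split => //.
  + by rewrite oppr_eq0 expf_neq0.
  + apply: functional_extensionality => w.
    by rewrite /R3 /nc_of !big_cons !big_nil mul0r add0r.
- move=> [pnz hi]; exists 0, (i * p ^+ 2), p, (p ^+ 2), (p ^+ 3); split => //.
  + rewrite mulf_neq0 ?expf_neq0 //; apply/eqP => i0; move: hi.
    by rewrite i0 expr0n /= => /eqP; rewrite eq_sym oppr_eq0 oner_eq0.
  + apply: functional_extensionality => w.
    by rewrite /R3 /nc_of !big_cons !big_nil mul0r add0r.
- move=> [pnz hj]; exists p, (p ^+ 2), 0, 0, (j * p ^+ 3); split => //.
  + by rewrite expf_neq0.
  + apply: functional_extensionality => w.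
    by rewrite /R4 /nc_of !big_cons !big_nil !mul0r !add0r.
- move=> pnz; exists v, (p ^+ 2), (v + p), (p ^+ 2 + p * v), (p ^+ 3); split => //.
  by rewrite expf_neq0.
Qed.
End Shape.


Theorem proposition7p12 (k : fieldType) (i j : k) (m1 m2 : member k) :
  valid i j m1 -> valid i j m2 ->
  (graded_iso (rel_ideal i j m1) (rel_ideal i j m2) <->
   (rel3 i j m1 =1 rel3 i j m2 /\ rel4 i j m1 =1 rel4 i j m2)).
Proof.
move=> V1 V2.
have [v1 [s1 [a1 [b1 [c1 [s1nz E31 E41]]]]]] := @shape k i j m1 V1.
have [v2 [s2 [a2 [b2 [c2 [_ E32 E42]]]]]] := @shape k i j m2 V2.
rewrite /rel_ideal E31 E41 E32 E42; split.
- case=> Psi [Hh [Hlin [Hiso [_ [Hmul _]]]]].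
  by have [-> -> -> -> ->] := @final k v1 s1 a1 b1 c1 v2 s2 a2 b2 c2 s1nz Psi Hh Hlin Hiso Hmul.
- case=> H3 H4.
  rewrite (functional_extensionality _ _ H3) (functional_extensionality _ _ H4).
  exists (fun _ f => f); split => //; split => //; split => //; split; [|split].
  + move=> n g hg; exists g => //; exists [::] => w.
    by rewrite big_nil /nc_sub subrr.
  + move=> m n f g _ _; exists [::] => w.
    by rewrite big_nil /nc_sub subrr.
  + by exists [::] => w; rewrite big_nil /nc_sub subrr.
Qed.
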